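(* The metric space $(\mathfrak S_1(\mathbb T),d)$ is complete.
   Context: A rigged subset $S$ of a set $X$ assigns to each $x$ a multiplicity $\mathrm{mult}(x;S)\in\{0,1,\dots,\infty\}$; an enumeration is a sequence in which each $x$ appears $\mathrm{mult}(x;S)$ times. $\mathfrak S_\infty(\mathbb T)$ consists of countable rigged subsets of the unit circle $\mathbb T$ (arc-length metric) in which $1$ has multiplicity $\infty$ and with no other accumulation point (point every neighbourhood of which contains infinitely many elements counting multiplicity). $d(S,T)=\inf\sum_j\mathrm{dist}(s_j,t_j)$ over all enumerations $(s_j),(t_j)$ of $S,T$, and $\mathfrak S_1(\mathbb T)=\{S\in\mathfrak S_\infty(\mathbb T):d(S,\mathbf 1)<\infty\}$, with $\mathbf 1$ the rigged set consisting of $1$ with infinite multiplicity. *)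

(* Defs.v *)
From HB Require Import structures.
From mathcomp Require Import all_boot all_order all_algebra.
From mathcomp Require Import all_classical all_reals all_analysis.
Set Implicit Arguments. Unset Strict Implicit. Unset Printing Implicit Defensive.
Import Order.TTheory GRing.Theory Num.Theory.
Local Open Scope classical_set_scope.
Local Open Scope ring_scope.

(* The unit circle T, parametrized by the angle theta in [0, 2 pi):
   the point e^{i theta}. *)
Definition circ (R : realType) := {t : R | (0 <= t) && (t < 2 * (pi : R))}.

Lemma zero_in_circ (R : realType) : ((0:R) <= 0) && (0 < 2 * (pi : R)).
Proof. by rewrite lexx /= mulr_gt0 // pi_gt0. Qed.

Definition one_c (R : realType) : circ R := exist _ 0 ((@zero_in_circ R)).

Definition cdist (R : realType) (x y : circ R) : R :=
  Num.min `|sval x - sval y| (2 * (pi : R) - `|sval x - sval y|).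

Inductive emult := Fin of nat | Inf.

(* a rigged subset of the circle: its multiplicity function *)
Definition rigged (R : realType) := circ R -> emult.

Definition support (R : realType) (S : rigged R) : set (circ R) :=
  [set x | S x <> Fin 0].

(* A contains infinitely many elements of S counting multiplicity *)
Definition infinite_mass (R : realType) (S : rigged R) (A : set (circ R)) :=
  (exists2 y, A y & S y = Inf) \/ infinite_set (A `&` support S).

Definition accum_point (R : realType) (S : rigged R) (x : circ R) :=
  forall e : R, 0 < e -> infinite_mass S [set y | cdist x y < e].

Definition S_inf (R : realType) (S : rigged R) :=
  [/\ countable (support S), S (@one_c R) = Inf &
      forall x, accum_point S x -> x = @one_c R].

(* enumeration of S (indexed by nat, since S in S_inf is infinite):
   each x appears exactly mult(x;S) times *)
Definition enumeration (R : realType) (S : rigged R) (s : nat -> circ R) :=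
  forall x, match S x return Prop with
            | Fin k => ([set j | s j = x] #= `I_k)%card
            | Inf => infinite_set [set j | s j = x]
            end.

Definition rdist (R : realType) (S T : rigged R) : \bar R :=
  ereal_inf [set v : \bar R | exists s t, [/\ enumeration S s, enumeration T t &
     (v = \sum_(0 <= j <oo) ((cdist (s j) (t j))%:E))%E]].

Definition rone (R : realType) : rigged R :=
  fun x => if pselect (x = @one_c R) then Inf else Fin 0.

Definition S_one (R : realType) (S : rigged R) :=
  S_inf S /\ (rdist S (@rone R) < +oo)%E.

(* Main.v *)
Require Import Defs.
From HB Require Import structures.
From mathcomp Require Import all_boot all_order all_algebra.
From mathcomp Require Import all_classical all_reals all_analysis.
From mathcomp Require Import lra zify.
Import Order.TTheory GRing.Theory Num.Theory.
Local Open Scope classical_set_scope.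
Local Open Scope ring_scope.

Section Circ.
Context {R : realType}.
Implicit Types a b c : circ R.

Lemma circ_bnd a : 0 <= sval a < 2 * pi.
Proof. by case: a => t /= /andP[-> ->]. Qed.

Lemma cdist_ge0 a b : 0 <= cdist a b.
Proof.
rewrite /cdist le_min normr_ge0 /= subr_ge0.
have /andP[a0 a1] := circ_bnd a; have /andP[b0 b1] := circ_bnd b.
have [h|h] := lerP 0 (sval a - sval b);
  [rewrite ger0_norm // | rewrite ltr0_norm //]; lra.
Qed.

Lemma cdist_congr a b d (z : int) :
  sval a - sval b = d - 2 * pi * z%:~R -> cdist a b <= `|d|.
Proof.
move=> E; rewrite /cdist ge_min.
have /andP[a0 a1] := circ_bnd a; have /andP[b0 b1] := circ_bnd b.
have pp : (0:R) < pi := pi_gt0 _.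
have [z0|z0|z0] := ltrgt0P z.
- have zr : (1 : R) <= z%:~R.
    by rewrite -[1]/(1%:~R) ler_int; lia.
  have : 2 * pi <= 2 * pi * z%:~R :> R.
    by rewrite -{1}(mulr1 (2 * pi)) ler_pM2l // mulr_gt0.
  move=> h; apply/orP; right.
  have [h1|h1] := lerP 0 (sval a - sval b);
    [rewrite ger0_norm // | rewrite ltr0_norm //];
  (have [h2|h2] := lerP 0 d; [rewrite (ger0_norm h2) | rewrite (ltr0_norm h2)]); lra.
- have zr : (z%:~R : R) <= -1.
    by rewrite -[-1]/((-1)%:~R) ler_int; lia.
  have : 2 * pi * z%:~R <= - (2 * pi) :> R.
    by rewrite -mulrN1 ler_pM2l // mulr_gt0.
  move=> h; apply/orP; right.
  have [h1|h1] := lerP 0 (sval a - sval b);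
    [rewrite ger0_norm // | rewrite ltr0_norm //];
  (have [h2|h2] := lerP 0 d; [rewrite (ger0_norm h2) | rewrite (ltr0_norm h2)]); lra.
- by rewrite z0 mulr0 subr0 in E; rewrite E lexx.
Qed.

Lemma cdist_lift a b : exists (d : R) (z : int),
  `|d| = cdist a b /\ sval a + d = sval b + 2 * pi * z%:~R.
Proof.
have /andP[a0 a1] := circ_bnd a; have /andP[b0 b1] := circ_bnd b.
have [h|h] := lerP `|sval a - sval b| (2 * pi - `|sval a - sval b|).
- have -> : cdist a b = `|sval a - sval b| by rewrite /cdist (min_l h).
  exists (sval b - sval a), 0; rewrite mulr0 addr0 distrC; split => //.
  by rewrite addrC subrK.
- have -> : cdist a b = 2 * pi - `|sval a - sval b| by rewrite /cdist (min_r (ltW h)).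
  have [h1|h1] := lerP 0 (sval a - sval b).
  + exists (2 * pi - (sval a - sval b)), 1; rewrite mulr1; split; last by lra.
    rewrite (ger0_norm h1) ger0_norm //; lra.
  + exists (sval b - sval a - 2 * pi), (-1); rewrite mulrN1; split; last by lra.
    rewrite ltr0_norm ?ltr0_norm //; lra.
Qed.

Lemma cdistxx a : cdist a a = 0.
Proof.
apply/le_anti; rewrite cdist_ge0 andbT.
by rewrite (le_trans (@cdist_congr a a 0 0 _)) ?normr0 // !subrr mulr0 subr0.
Qed.

Lemma cdistC a b : cdist a b = cdist b a.
Proof. by rewrite /cdist distrC. Qed.

Lemma cdist_triangle a b c : cdist a c <= cdist a b + cdist b c.
Proof.
have [d1 [z1 [n1 e1]]] := cdist_lift a b.
have [d2 [z2 [n2 e2]]] := cdist_lift b c.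
rewrite -n1 -n2 (le_trans _ (ler_normD d1 d2)) // -normrN.
apply: (@cdist_congr a c _ (- (z1 + z2))).
rewrite rmorphN rmorphD /= mulrN; set P := 2 * pi in e1 e2 *; rewrite mulrDr; lra.
Qed.

Lemma cdist_gt0 {a b} : a <> b -> 0 < cdist a b.
Proof.
move=> ab; have /andP[a0 a1] := circ_bnd a; have /andP[b0 b1] := circ_bnd b.
have ne : sval a - sval b != 0.
  rewrite subr_eq0; apply/eqP => E; apply: ab.
  move: a b E {a0 a1 b0 b1} => [x px] [y py] /= E; subst y.
  by congr exist; apply: bool_irrelevance.
rewrite /cdist lt_min normr_gt0 ne /= subr_gt0.
have [h|h] := lerP 0 (sval a - sval b);
  [rewrite ger0_norm // | rewrite ltr0_norm //]; lra.
Qed.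

End Circ.
Section Card.
Context {R : realType}.
Local Open Scope card_scope.

Definition fib (s : nat -> circ R) x := [set j | s j = x].
Definition fibP (m : emult) (F : set nat) : Prop :=
  match m with Fin k => F #= `I_k | Inf => infinite_set F end.

Lemma enumP (S : rigged R) s : enumeration S s <-> forall x, fibP (S x) (fib s x).
Proof. by []. Qed.

Lemma infinite_cardT {A : set nat} : infinite_set A -> A #= [set: nat].
Proof.
move=> h; rewrite card_eq_le; apply/andP; split; first exact: subset_card_le.
by apply/infiniteP.
Qed.

Lemma fibP_eq {m} {A B : set nat} : A #= B -> fibP m A -> fibP m B.
Proof.
case: m => [k|] /= AB.
- by move=> h; apply: card_eq_trans (card_esym AB) h.
- move=> h [n hn]; apply: h; exists n; exact: card_eq_trans AB hn.
Qed.

Lemma fibP_same {m} {A B : set nat} : fibP m A -> fibP m B -> A #= B.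
Proof.
case: m => [k|] /= hA hB.
- exact: card_eq_trans hA (card_esym hB).
- exact: card_eq_trans (infinite_cardT hA) (card_esym (infinite_cardT hB)).
Qed.

Lemma enum_perm {S : rigged R} {s s'} : enumeration S s -> enumeration S s' ->
  exists sig : nat -> nat, set_bij setT setT sig /\ forall j, s' (sig j) = s j.
Proof.
move=> hs hs'.
have : forall x, exists f : nat -> nat, set_bij (fib s x) (fib s' x) f.
  move=> x; apply/card_set_bijP; exact: fibP_same (hs x) (hs' x).
move=> /choice[F hF].
have Fs : forall j, s' (F (s j) j) = s j.
  by move=> j; have [fu _ _] := hF (s j); exact: (fu j).
exists (fun j => F (s j) j); split => //; split.
- by [].
- move=> i j _ _ /= E.
  have sij : s j = s i by rewrite -Fs -E Fs.
  have [_ inj _] := hF (s i).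
  move: E; rewrite sij => E; apply: inj => //; rewrite inE //.
- move=> i _; have [_ _ su] := hF (s' i).
  have [j hj Ej] := su i erefl.
  by exists j => //=; rewrite hj.
Qed.

Lemma enum_comp {S : rigged R} {u sig} : enumeration S u -> set_bij setT setT sig ->
  enumeration S (u \o sig).
Proof.
move=> hu [_ inj su] x; apply: fibP_eq (hu x); apply: card_esym.
apply/card_set_bijP; exists sig; split.
- by move=> j.
- by move=> i j _ _; apply: inj; rewrite inE.
- move=> i hi; have [j _ Ej] := su i I.
  by exists j => //; rewrite /fib /= Ej.
Qed.

End Card.
Section Dist.
Context {R : realType}.
Local Open Scope ereal_scope.

Definition csum (s t : nat -> circ R) :=
  \sum_(0 <= j <oo) ((cdist (s j) (t j))%:E).

Lemma csum_ge0 s t : 0 <= csum s t.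
Proof. by apply: nneseries_ge0 => n _ _; rewrite lee_fin cdist_ge0. Qed.

Lemma series_perm (g : nat -> R) sig : (forall j, (0 <= g j)%R) ->
  set_bij setT setT sig ->
  \sum_(0 <= j <oo) (g (sig j))%:E = \sum_(0 <= j <oo) (g j)%:E.
Proof.
move=> g0 hb.
rewrite nneseries_esumT; last by move=> n; rewrite lee_fin.
rewrite nneseries_esumT; last by move=> n; rewrite lee_fin.
by rewrite (@reindex_esum R _ _ setT setT sig (fun j => (g j)%:E)).
Qed.

Lemma rdist_le {S T : rigged R} {s t} : enumeration S s -> enumeration T t ->
  rdist S T <= csum s t.
Proof. by move=> hs ht; apply: ereal_inf_lbound; exists s, t. Qed.

Lemma rdist_ge0 (S T : rigged R) : 0 <= rdist S T.
Proof. by apply: le_ereal_inf_tmp => _ [s [t [_ _ ->]]]; exact: csum_ge0. Qed.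

Lemma step_exists {A B : rigged R} {s} {x : \bar R} : enumeration A s ->
  rdist A B < x -> exists s', enumeration B s' /\ csum s s' < x.
Proof.
move=> hs /ereal_inf_lt[_ [t [u [ht hu ->]]]] lt.
have [sig [hb E]] := enum_perm hs ht.
exists (u \o sig); split; first exact: enum_comp.
rewrite /csum (eq_eseriesr (g := fun j => (cdist (t (sig j)) (u (sig j)))%:E));
  last by move=> j _ /=; rewrite E.
by rewrite (series_perm (fun j => cdist (t j) (u j))) // => j; exact: cdist_ge0.
Qed.

Lemma inf_add_le (P Q : set (\bar R)) c : (forall a, P a -> 0 <= a) ->
  (forall b, Q b -> 0 <= b) -> (forall a b, P a -> Q b -> c <= a + b) ->
  c <= ereal_inf P + ereal_inf Q.
Proof.
move=> P0 Q0 H.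
have iP : 0 <= ereal_inf P by apply: le_ereal_inf_tmp.
have iQ : 0 <= ereal_inf Q by apply: le_ereal_inf_tmp.
have [hP|hP] := ltP (ereal_inf P) +oo; last first.
  have -> : ereal_inf P = +oo by apply/eqP; rewrite -leye_eq.
  by rewrite addye ?leey // gt_eqF // (lt_le_trans _ iQ).
have [hQ|hQ] := ltP (ereal_inf Q) +oo; last first.
  have -> : ereal_inf Q = +oo by apply/eqP; rewrite -leye_eq.
  by rewrite addey ?leey // gt_eqF // (lt_le_trans _ iP).
have fP : ereal_inf P \is a fin_num by rewrite ge0_fin_numE.
have fQ : ereal_inf Q \is a fin_num by rewrite ge0_fin_numE.
have [p Ep] : exists p, ereal_inf P = p%:E by exists (fine (ereal_inf P)); rewrite fineK.
have [q Eq] : exists q, ereal_inf Q = q%:E by exists (fine (ereal_inf Q)); rewrite fineK.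
rewrite Ep Eq.
apply/lee_addgt0Pr => e e0.
have e2 : (0 < e / 2)%R by rewrite divr_gt0.
have [a Pa ha] : exists2 a, P a & a < (p + e / 2)%:E.
  apply: ereal_inf_lt; rewrite Ep lte_fin; lra.
have [b Qb hb] : exists2 b, Q b & b < (q + e / 2)%:E.
  apply: ereal_inf_lt; rewrite Eq lte_fin; lra.
apply: (le_trans (H _ _ Pa Qb)).
have := P0 _ Pa; have := Q0 _ Qb.
case: a ha {Pa} => [a||] //; case: b hb {Qb} => [b||] //.
rewrite !lte_fin !lee_fin => ha hb b0 a0; lra.
Qed.

Lemma rdist_triangle (A B C : rigged R) :
  rdist A C <= rdist A B + rdist B C.
Proof.
apply: inf_add_le.
- by move=> _ [s [t [_ _ ->]]]; exact: csum_ge0.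
- by move=> _ [s [t [_ _ ->]]]; exact: csum_ge0.
move=> _ _ [s [t [hs ht ->]]] [t' [u [ht' hu ->]]].
have [sig [hb E]] := enum_perm ht ht'.
apply: (le_trans (rdist_le hs (enum_comp hu hb))).
have -> : \sum_(0 <= j <oo) ((cdist (t' j) (u j))%:E) = csum t (u \o sig).
  rewrite /csum -(series_perm (fun j => cdist (t' j) (u j)) sig (fun j => cdist_ge0 _ _) hb).
  by apply: eq_eseriesr => j _ /=; rewrite E.
rewrite /csum -nneseriesD; last 2 first.
- by move=> i _ _; rewrite lee_fin cdist_ge0.
- by move=> i _ _; rewrite lee_fin cdist_ge0.
apply: lee_nneseries.
- by move=> i _ _; rewrite lee_fin cdist_ge0.
- by move=> n _ /=; rewrite -EFinD lee_fin cdist_triangle.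
Qed.

End Dist.
Section Ilv.
Context {R : realType}.
Local Open Scope card_scope.

Definition ilv (s : nat -> circ R) j := if odd j then @one_c R else s j./2.

Lemma infinite_odd : infinite_set [set j : nat | odd j].
Proof.
apply/infiniteP.
have h : (fun j => j.*2.+1) @` [set: nat] #= [set: nat].
  by apply: inj_card_eq => i j _ _ [] /double_inj.
apply: (@card_le_trans _ _ _ ((fun j => j.*2.+1) @` [set: nat])).
  by move: h; rewrite card_eq_sym card_eq_le => /andP[].
by apply: subset_card_le => _ [j _ <-] /=; rewrite odd_double.
Qed.

Lemma enum_ilv {A : rigged R} {s} : enumeration A s -> A (@one_c R) = Inf ->
  enumeration A (ilv s).
Proof.
move=> hs h1 x; change (fibP (A x) (fib (ilv s) x)).
case: (pselect (x = @one_c R)) => [->|nx].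
- rewrite h1 /= => fin; apply: infinite_odd; apply: sub_finite_set fin => j /= oj.
  by rewrite /fib /ilv /= oj.
- apply: fibP_eq (hs x); apply/card_set_bijP; exists (fun j => j.*2); split.
  + by move=> j hj; rewrite /fib /ilv /= odd_double doubleK.
  + by move=> i j _ _ /double_inj.
  + move=> i; rewrite /fib /ilv /=; case: ifP => oi hi; first by case: nx.
    exists i./2 => //; by rewrite -{2}(odd_double_half i) oi add0n.
Qed.

Lemma ilv_sum s t : csum (ilv s) (ilv t) = csum s t.
Proof.
rewrite /csum.
transitivity (\sum_(0 <= j <oo | ~~ odd j) ((cdist (s j./2) (t j./2))%:E))%E.
  rewrite [RHS]eseries_mkcond; apply: eq_eseriesr => j _; rewrite /ilv.
  by case: (odd j) => //=; rewrite cdistxx.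
rewrite nneseries_esum; last by move=> n _; rewrite lee_fin cdist_ge0.
rewrite nneseries_esumT; last by move=> n; rewrite lee_fin cdist_ge0.
rewrite (@reindex_esum R _ _ setT [set x | ~~ odd x] (fun j => j.*2)
  (fun j => (cdist (s j./2) (t j./2))%:E)).
  by apply: eq_esum => i _ /=; rewrite doubleK.
split.
- by move=> j _ /=; rewrite odd_double.
- by move=> i j _ _ /double_inj.
- move=> i /= oi; exists i./2 => //.
  by rewrite -{2}(odd_double_half i) (negbTE oi) add0n.
Qed.

Lemma enum_rone_const {r} : enumeration (@rone R) r -> forall j, r j = @one_c R.
Proof.
move=> h j; apply: contrapT => nj; have := h (r j); rewrite /rone.
case: pselect => // _ /=; rewrite II0 card_eq0 => /eqP f0.
have : [set i | r i = r j] j by [].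
by rewrite f0.
Qed.

Lemma enum_rone : enumeration (@rone R) (fun=> @one_c R).
Proof.
move=> x; rewrite /rone; case: pselect => [E|nx] /=.
- subst x; move=> fin; apply: infinite_nat; exact: sub_finite_set fin.
- have -> : [set j : nat | @one_c R = x] = set0.
    by apply/seteqP; split => // j /= E; apply: nx.
  by rewrite II0.
Qed.

Lemma fib_nonempty {S : rigged R} {y x} : enumeration S y -> S x <> Fin 0 ->
  exists j, y j = x.
Proof.
move=> hy nx; apply: contrapT => ne.
have f0 : fib y x = set0 by apply/seteqP; split => // j /= E; apply: ne; exists j.
move: (hy x); change (fibP (S x) (fib y x) -> False); rewrite f0.
case E : (S x) => [k|] /=.
- rewrite card_eq_sym card_eq0 => /eqP.
  by case: k E => // k E /(congr1 (fun A => A 0%N)); rewrite /= => <-.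
- by apply.
Qed.

Lemma sum_ge_const (f : nat -> R) (c : R) (s : seq nat) :
  (forall i, i \in s -> c <= f i) -> c *+ size s <= \sum_(i <- s) f i.
Proof.
elim: s => [|a s IH] h; first by rewrite big_nil.
rewrite big_cons /= mulrS lerD //; first by apply: h; rewrite mem_head.
by apply: IH => i hi; apply: h; rewrite in_cons hi orbT.
Qed.

Lemma finite_large (f : nat -> R) (c : R) : (forall j, 0 <= f j) ->
  (\sum_(0 <= j <oo) (f j)%:E < +oo)%E -> 0 < c ->
  finite_set [set j | c <= f j].
Proof.
move=> f0 fin c0; apply: contrapT => inf.
have s0 : (0 <= \sum_(0 <= j <oo) (f j)%:E)%E.
  by apply: nneseries_ge0 => n _ _; rewrite lee_fin.
have [T ET] : exists T, (\sum_(0 <= j <oo) (f j)%:E = T%:E)%E.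
  exists (fine (\sum_(0 <= j <oo) (f j)%:E)%E); rewrite fineK //.
  by rewrite ge0_fin_numE.
have [n hn] : exists n : nat, T / c < n%:R.
  exists (Num.bound (`|T / c|))%N; apply: le_lt_trans (ler_norm _) _.
  exact: archi_boundP.
have [B BJ Bn] := infinite_set_fset n inf.
have : ((\sum_(i <- finmap.enum_fset B) f i)%:E <= T%:E)%E.
  rewrite -ET -sumEFin.
  by apply: (le_trans _ (lee_sum_fset_lim B xpredT _)) => // i _; rewrite lee_fin.
rewrite lee_fin => hB.
have : c *+ size (finmap.enum_fset B) <= T.
  apply: le_trans hB; apply: sum_ge_const => i iB; exact: BJ.
rewrite -mulr_natr => h2.
have : c * n%:R <= T.
  apply: le_trans h2; rewrite ler_pM2l // ler_nat //.
rewrite -ler_pdivlMl // mulrC => h3.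
by have := lt_le_trans hn h3; rewrite ltxx.
Qed.

End Ilv.
Section Sone.
Context {R : realType}.
Local Open Scope card_scope.

Lemma enum_of_fin {S T : rigged R} : (rdist S T < +oo)%E ->
  exists s t, [/\ enumeration S s, enumeration T t & (csum s t < +oo)%E].
Proof.
by move=> /ereal_inf_lt[_ [s [t [hs ht ->]]] h]; exists s, t.
Qed.

Lemma S_one_of (S : rigged R) : S (@one_c R) = Inf ->
  (rdist S (@rone R) < +oo)%E -> S_one S.
Proof.
move=> h1 hd; split => //; split => //.
- have [y [r [hy hr _]]] := enum_of_fin hd.
  apply: (@card_le_trans _ _ _ (y @` setT)); last first.
    apply: card_le_trans (card_image_le y setT) _; exact: countableP.
  apply: subset_card_le => x hx; have [j Ej] := fib_nonempty hy hx.
  by exists j.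
- have [y [r [hy hr hfin]]] := enum_of_fin hd.
  have rc := enum_rone_const hr.
  have hf : (\sum_(0 <= j <oo) (cdist (y j) (@one_c R))%:E < +oo)%E.
    by move: hfin; rewrite /csum; under eq_eseriesr do rewrite rc.
  move=> x hx; apply: contrapT => nx.
  have d0 := cdist_gt0 nx.
  set d := cdist x (@one_c R) in d0.
  have K := @finite_large R (fun j => cdist (y j) (@one_c R)) (d / 2)
     (fun j => cdist_ge0 _ _) hf (divr_gt0 d0 (ltr0Sn _ 1)).
  have tri : forall w, cdist x w < d / 2 -> d / 2 <= cdist w (@one_c R).
    by move=> w hw; have := cdist_triangle x w (@one_c R); rewrite -/d; lra.
  case: (hx (d / 2) (divr_gt0 d0 (ltr0Sn _ 1))) => [[w hw Sw]|hinf].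
  + have := hy w; change (fibP (S w) (fib y w) -> False); rewrite Sw /=.
    apply; apply: sub_finite_set K => j /= Ej; rewrite Ej; exact: tri.
  + apply: hinf; apply: sub_finite_set (finite_image y K).
    move=> z [hz hsz]; have [j Ej] := fib_nonempty hy hsz.
    by exists j => //=; rewrite Ej; exact: tri.
Qed.

End Sone.
Section Aux.
Context {R : realType}.

Definition w (k : nat) : R := (2 ^+ k)^-1.

Lemma w_gt0 k : 0 < w k.
Proof. by rewrite /w invr_gt0 exprn_gt0. Qed.

Lemma w_S k : 2 * w k.+1 = w k.
Proof. by rewrite /w exprS invfM mulrA divff ?mul1r // pnatr_eq0. Qed.

Lemma w0 : w 0 = 1.
Proof. by rewrite /w expr0 invr1. Qed.

Lemma w_le k n : w (k + n)%N <= w n.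
Proof.
rewrite /w lef_pV2 ?posrE ?exprn_gt0 //.
by rewrite ler_eXn2l // ?ltr1n // leq_addl.
Qed.

Lemma w_small {eps : R} : 0 < eps -> exists k, w k < eps.
Proof.
move=> e0; have [n hn] : exists n : nat, eps^-1 < n%:R.
  by exists (Num.bound eps^-1); apply: archi_boundP; rewrite invr_ge0 ltW.
exists n; rewrite /w -[eps]invrK ltf_pV2 ?posrE ?invr_gt0 ?exprn_gt0 //.
apply: lt_trans hn _; rewrite -natrX ltr_nat; exact: ltn_expl.
Qed.

Lemma lift_fun : exists D : circ R -> circ R -> R, forall a b,
  `|D a b| = cdist a b /\ exists z : int, sval a + D a b = sval b + 2 * pi * z%:~R.
Proof.
have /choice[D hD] : forall ab : circ R * circ R, exists d : R,
  `|d| = cdist ab.1 ab.2 /\ exists z : int, sval ab.1 + d = sval ab.2 + 2 * pi * z%:~R.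
  by move=> [a b]; have [d [z [h1 h2]]] := cdist_lift a b; exists d; split => //; exists z.
by exists (fun a b => D (a, b)) => a b; exact: (hD (a, b)).
Qed.

Lemma red_proof (t : R) :
  (0 <= t - 2 * pi * (Num.floor (t / (2 * pi)))%:~R) &&
  (t - 2 * pi * (Num.floor (t / (2 * pi)))%:~R < 2 * pi).
Proof.
have tp : (0:R) < 2 * pi by rewrite mulr_gt0 // pi_gt0.
have h1 := floor_le (t / (2 * pi)); have h2 := floorD1_gt (t / (2 * pi)).
rewrite rmorphD /= in h2.
set f : R := (Num.floor (t / (2 * pi)))%:~R in h1 h2 *.
have e : t = 2 * pi * (t / (2 * pi)) by rewrite mulrC divfK // gt_eqF.
set q := t / (2 * pi) in h1 h2 e.
apply/andP; split.
- by rewrite subr_ge0 {1}e ler_pM2l.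
- rewrite ltrBlDr {1}e -[X in _ < X + _]mulr1 -mulrDr ltr_pM2l //; rewrite addrC; exact: h2.
Qed.

Definition red (t : R) : circ R :=
  exist (fun x : R => (0 <= x) && (x < 2 * pi)) _ (red_proof t).

Lemma redE t : t = sval (red t) + 2 * pi * (Num.floor (t / (2 * pi)))%:~R.
Proof. by rewrite /= subrK. Qed.

End Aux.

Section Limit.
Context {R : realType}.

Lemma aux_lin (a b d p z z' : R) :
  a + d = b + p * z' -> a + p * z + d = b + p * (z + z').
Proof. by move=> h; rewrite mulrDr; lra. Qed.

Lemma aux_lin2 (Lm l X Y p z1 f : R) :
  Lm = Y + p * z1 -> l = X + p * f -> Y - X = (Lm - l) - p * (z1 - f).
Proof. by move=> h1 h2; rewrite mulrBr; lra. Qed.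

Lemma limit_exists (e : nat -> nat -> circ R) :
  (forall k, (csum (e k) (e k.+1) < (w k)%:E)%E) ->
  exists x : nat -> circ R, forall k, (csum (e k) x <= (2 * w k)%:E)%E.
Proof.
move=> he.
pose c k j := cdist (e k j) (e k.+1 j).
have c0 : forall k j, 0 <= c k j by move=> k j; exact: cdist_ge0.
have cs : forall k J, \sum_(j < J) c k j <= w k.
  move=> k J; have := @nneseries_lim_ge R (fun j => (c k j)%:E) xpredT 0 J.
  move=> /(_ (fun n _ _ => c0 k n)) h.
  have := le_trans h (ltW (he k)); rewrite sumEFin lee_fin.
  by rewrite big_mkord.
have c1 : forall k j, c k j <= w k.
  move=> k j; apply: le_trans (cs k j.+1); rewrite big_ord_recr /= lerDr.
  by apply: sumr_ge0 => i _.
have [D hD] := (@lift_fun R).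
have [L [L0 LS]] : exists L : nat -> nat -> R, (forall j, L j 0%N = sval (e 0%N j)) /\
    forall j k, L j k.+1 = L j k + D (e k j) (e k.+1 j).
  exists (fun j => fix L k := if k is k'.+1 then L k' + D (e k' j) (e k'.+1 j)
                              else sval (e 0%N j)); by split.
have Linv : forall j k, exists z : int, L j k = sval (e k j) + 2 * pi * z%:~R.
  move=> j; elim=> [|k [z IH]]; first by exists 0; rewrite L0 mulr0 addr0.
  have [_ [z' hz']] := hD (e k j) (e k.+1 j).
  by exists (z + z'); rewrite LS IH rmorphD /=; apply: aux_lin.
have Dle : forall j k, - w k <= D (e k j) (e k.+1 j) <= w k.
  by move=> j k; rewrite -ler_norml (proj1 (hD _ _)); exact: c1.
have Li : forall j k n, L j (k + n)%N + 2 * w (k + n)%N <= L j k + 2 * w k.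
  move=> j k; elim=> [|n IH]; first by rewrite addn0.
  rewrite addnS LS; have /andP[_ h] := Dle j (k + n)%N.
  have := (@w_S R) (k + n)%N; lra.
have Lii : forall j k n, L j k - 2 * w k + 2 * w (k + n)%N <= L j (k + n)%N.
  move=> j k; elim=> [|n IH]; first by rewrite addn0; lra.
  rewrite addnS LS; have /andP[h _] := Dle j (k + n)%N.
  have := (@w_S R) (k + n)%N; lra.
have [l lE] : exists l : nat -> R, forall j, l j = inf (range (fun k => L j k + 2 * w k)).
  by exists (fun j => inf (range (fun k => L j k + 2 * w k))).
have lb : forall j M, lbound (range (fun k => L j k + 2 * w k)) (L j M - 2 * w M).
  move=> j M _ [k _ <-].
  have [Mk|kM] := leqP M k.
  - have := Lii j M (k - M)%N; rewrite subnKC //.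
    have := (@w_gt0 R) k; clear Mk; lra.
  - have := Li j k (M - k)%N; rewrite subnKC; last exact: ltnW.
    have := (@w_gt0 R) M; clear kM; lra.
have hl : forall j M, `|L j M - l j| <= 2 * w M.
  move=> j M; rewrite ler_norml lE; apply/andP; split.
  - have : inf (range (fun k => L j k + 2 * w k)) <= L j M + 2 * w M.
      apply: ge_inf; last by exists M.
      by exists (L j 0 - 2 * w 0); exact: lb.
    lra.
  - have : L j M - 2 * w M <= inf (range (fun k => L j k + 2 * w k)).
      apply: lb_le_inf; last exact: lb.
      by exists (L j 0 + 2 * w 0), 0%N.
    lra.
have [x xE] : exists x : nat -> circ R, forall j, x j = red (l j).
  by exists (fun j => red (l j)).
have dx : forall j M, cdist (e M j) (x j) <= 2 * w M.
  move=> j M; have [z1 hz1] := Linv j M.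
  apply: le_trans (hl j M).
  apply: (@cdist_congr R _ _ _ (z1 - Num.floor (l j / (2 * pi)))).
  rewrite rmorphB /= xE; apply: aux_lin2 hz1 (redE (l j)).
have chain : forall k n J, \sum_(j < J) cdist (e k j) (e (k + n)%N j)
                            <= 2 * w k - 2 * w (k + n)%N.
  move=> k n J; elim: n => [|n IH].
    rewrite addn0 subrr; rewrite big1 // => j _; exact: cdistxx.
  apply: le_trans (_ : \sum_(j < J) (cdist (e k j) (e (k + n)%N j) + c (k + n)%N j) <= _).
    by apply: ler_sum => j _; rewrite addnS; exact: cdist_triangle.
  rewrite big_split /=; have := cs (k + n)%N J; have := (@w_S R) (k + n)%N.
  rewrite addnS; lra.
have fin : forall k J, \sum_(j < J) cdist (e k j) (x j) <= 2 * w k.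
  move=> k J; apply/ler_addgt0Pr => eps e0.
  have J0 : 0 < 2 * (J%:R : R) + 1 by rewrite ltr_wpDl // mulr_ge0.
  have [n hn] := (@w_small R _) (divr_gt0 e0 J0).
  have wn := (@w_le R) k n.
  have a0 := (@w_gt0 R) (k + n)%N.
  have h : 2 * w (k + n)%N * J%:R <= eps.
    have : w (k + n)%N * (2 * J%:R + 1) < eps.
      by rewrite -ltr_pdivlMr //; exact: le_lt_trans hn.
    have : 0 <= (w (k + n)%N : R) * J%:R by apply: mulr_ge0; [exact: ltW|exact: ler0n].
    rewrite mulrDr mulr1 [w (k + n)%N * (2 * _)]mulrCA; lra.
  apply: le_trans (_ : \sum_(j < J) (cdist (e k j) (e (k + n)%N j) +
                                     cdist (e (k + n)%N j) (x j)) <= _).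
    by apply: ler_sum => j _; exact: cdist_triangle.
  rewrite big_split /=.
  have : \sum_(j < J) cdist (e (k + n)%N j) (x j) <= 2 * w (k + n)%N * J%:R.
    apply: le_trans (_ : \sum_(j < J) (2 * w (k + n)%N) <= _).
      by apply: ler_sum => j _; exact: dx.
    by rewrite sumr_const card_ord mulr_natr.
  have := chain k n J; lra.
exists x => k; rewrite /csum.
apply: lime_le; first by apply: is_cvg_nneseries => n _ _; rewrite lee_fin cdist_ge0.
apply: nearW => J; rewrite sumEFin lee_fin big_mkord; exact: fin.
Qed.

End Limit.

Lemma csumC {R : realType} (s t : nat -> circ R) : csum s t = csum t s.
Proof. by apply: eq_eseriesr => j _; rewrite cdistC. Qed.

Theorem mainTheorem7 (R : realType) (u : nat -> rigged R) :
  (forall n, S_one (u n)) ->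
  (forall e : R, 0 < e -> exists N : nat, forall m n : nat,
      (N <= m)%N -> (N <= n)%N -> (rdist (u m) (u n) < e%:E)%E) ->
  exists S : rigged R, S_one S /\
    (forall e : R, 0 < e -> exists N : nat, forall n : nat,
      (N <= n)%N -> (rdist (u n) S < e%:E)%E).
Proof.
move=> hS hC.
have /choice[N hN] : forall k, exists N0, forall m n, (N0 <= m)%N -> (N0 <= n)%N ->
    (rdist (u m) (u n) < (@w R k)%:E)%E.
  by move=> k; apply: hC; exact: w_gt0.
have [phi [phiN phiS]] : exists phi : nat -> nat,
    (forall k, (N k <= phi k)%N) /\ (forall k, (N k <= phi k.+1)%N).
  exists (fun k => \sum_(i < k.+1) N i)%N; split => k.
  - by rewrite big_ord_recr /= leq_addl.
  - rewrite big_ord_recr /= (leq_trans _ (leq_addr _ _)) //.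
    by rewrite big_ord_recr /= leq_addl.
have hstep : forall k, (rdist (u (phi k)) (u (phi k.+1)) < (@w R k)%:E)%E.
  by move=> k; apply: hN; [exact: phiN | exact: phiS].
have one_inf : forall n, u n (@one_c R) = Inf.
  by move=> n; case: (hS n) => -[_ h _] _.
have [e0 he0] : exists s, enumeration (u (phi 0%N)) s.
  by have [s [t [hs _ _]]] := enum_of_fin (hS (phi 0%N)).2; exists s.
have [nxt hnxt] : exists nxt : nat -> (nat -> circ R) -> (nat -> circ R),
    forall k s, enumeration (u (phi k)) s ->
      enumeration (u (phi k.+1)) (nxt k s) /\ (csum s (nxt k s) < (@w R k)%:E)%E.
  have /choice[F hF] : forall ks : nat * (nat -> circ R), exists s',
      enumeration (u (phi ks.1)) ks.2 ->
      enumeration (u (phi ks.1.+1)) s' /\ (csum ks.2 s' < (@w R ks.1)%:E)%E.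
    move=> [k s] /=; case: (pselect (enumeration (u (phi k)) s)) => h.
    + have [s' hs'] := step_exists h (hstep k); by exists s'.
    + by exists s.
  by exists (fun k s => F (k, s)) => k s; exact: (hF (k, s)).
have [e [E0 ES]] : exists e : nat -> nat -> circ R,
    e 0%N = e0 /\ forall k, e k.+1 = nxt k (e k).
  by exists (fix e k := if k is k'.+1 then nxt k' (e k') else e0).
have he : forall k, enumeration (u (phi k)) (e k).
  elim=> [|k IH]; first by rewrite E0.
  by rewrite ES; exact: (hnxt k _ IH).1.
have hcs : forall k, (csum (e k) (e k.+1) < (@w R k)%:E)%E.
  by move=> k; rewrite ES; exact: (hnxt k _ (he k)).2.
have [x hx] := limit_exists _ hcs.
have [S [S1 hSy]] : exists S : rigged R, S (@one_c R) = Inf /\ enumeration S (ilv x).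
  exists (fun z => if pselect (z = @one_c R) then Inf else
            if pselect (finite_set (fib (ilv x) z)) is left h
            then Fin (proj1_sig (cid h)) else Inf).
  split; first by case: pselect.
  move=> z /=; case: pselect => [E|nz].
  - subst z; move=> fin; apply: infinite_odd; apply: sub_finite_set fin => j /= oj.
    by rewrite /ilv oj.
  - case: pselect => [h|h]; [exact: (proj2_sig (cid h)) | exact: h].
have hd : forall k, (rdist (u (phi k)) S <= (2 * @w R k)%:E)%E.
  move=> k; apply: le_trans (rdist_le (enum_ilv (he k) (one_inf _)) hSy) _.
  by rewrite ilv_sum; exact: hx.
have hd' : (rdist S (u (phi 0%N)) <= 2%:E)%E.
  apply: le_trans (rdist_le hSy (enum_ilv (he 0%N) (one_inf _))) _.
  by rewrite ilv_sum csumC; have := hx 0%N; rewrite w0 mulr1.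
exists S; split.
  apply: S_one_of S1 _.
  apply: le_lt_trans (rdist_triangle S (u (phi 0%N)) (@rone R)) _.
  apply: lte_add_pinfty; first exact: le_lt_trans hd' (ltey _).
  exact: (hS _).2.
move=> eps eps0.
have [k hk] := (@w_small R _) (divr_gt0 eps0 (ltr0Sn _ 2)).
exists (phi k) => n hn.
apply: le_lt_trans (rdist_triangle (u n) (u (phi k)) S) _.
have h1 : (rdist (u n) (u (phi k)) < (@w R k)%:E)%E.
  by apply: hN; [exact: leq_trans (phiN k) hn | exact: phiN].
have fb : rdist (u (phi k)) S \is a fin_num.
  by rewrite ge0_fin_numE ?rdist_ge0 // (le_lt_trans (hd k) (ltey _)).
apply: lt_le_trans (lte_leD fb h1 (hd k)) _.
rewrite -EFinD lee_fin; have := (@w_gt0 R) k; lra.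
Qed.
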